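(* For every $n\geq 3$, $$|S_n(123,132,3421)|=|S_n(123,213,3421)|=3n-5.$$
   Context: Permutations are written in one-line notation. A permutation $\sigma\in S_n$ contains $\pi\in S_m$ if there are indices $i_1<\dots<i_m$ such that for all $j<l$, $\sigma_{i_j}<\sigma_{i_l}$ iff $\pi_j<\pi_l$; otherwise $\sigma$ avoids $\pi$. $S_n(\pi^{(1)},\dots,\pi^{(r)})$ is the set of permutations in $S_n$ avoiding all the listed patterns. *)

(* Defs.v *)
From mathcomp Require Import all_boot all_fingroup.
Set Implicit Arguments. Unset Strict Implicit. Unset Printing Implicit Defensive.

(* A permutation sigma in S_n is {perm 'I_n}; its one-line notation is
   sigma 0, sigma 1, ..., sigma (n-1) (values 0-based).
   A pattern pi in S_m is likewise a {perm 'I_m}. *)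

Definition contains (n m : nat) (sigma : {perm 'I_n}) (pi : {perm 'I_m}) : bool :=
  [exists f : {ffun 'I_m -> 'I_n},
    [forall j : 'I_m, forall l : 'I_m,
       (j < l) ==> (f j < f l) && ((sigma (f j) < sigma (f l)) == (pi j < pi l))]].

Definition avoids (n m : nat) (sigma : {perm 'I_n}) (pi : {perm 'I_m}) : bool :=
  ~~ contains sigma pi.

(* Patterns written 1-based in one-line notation, converted to 0-based perms. *)
Definition p123 : {perm 'I_3} := 1%g.
Definition p132 : {perm 'I_3} := tperm (inord 1) (inord 2).
Definition p213 : {perm 'I_3} := tperm (inord 0) (inord 1).
Definition f3421 (i : 'I_4) : 'I_4 := inord (nth 0 [:: 2; 3; 1; 0] i).
Lemma f3421_inj : injective f3421.
Proof.
move=> [[|[|[|[|i]]]] Hi] [[|[|[|[|j]]]] Hj] // /(congr1 val);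
  rewrite /f3421 /= ?inordK //; try by move=> _; apply: val_inj.
Qed.
Definition p3421 : {perm 'I_4} := perm f3421_inj.

Definition Av3 (n : nat) (t1 t2 : {perm 'I_3}) (t3 : {perm 'I_4}) : {set {perm 'I_n}} :=
  [set s : {perm 'I_n} | [&& avoids s t1, avoids s t2 & avoids s t3]].

(* Main.v *)
Require Import Defs.
From mathcomp Require Import all_boot all_fingroup zify.
Set Implicit Arguments. Unset Strict Implicit. Unset Printing Implicit Defensive.

Notation o30 := (@Ordinal 3 0 isT).
Notation o31 := (@Ordinal 3 1 isT).
Notation o32 := (@Ordinal 3 2 isT).
Notation o40 := (@Ordinal 4 0 isT).
Notation o41 := (@Ordinal 4 1 isT).
Notation o42 := (@Ordinal 4 2 isT).
Notation o43 := (@Ordinal 4 3 isT).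

Lemma I3cases (t : 'I_3) : [\/ t = o30, t = o31 | t = o32].
Proof.
case: t => [[|[|[|m]]] Hm] //; [apply: Or31|apply: Or32|apply: Or33]; exact: val_inj.
Qed.

Lemma I4cases (t : 'I_4) : [\/ t = o40, t = o41, t = o42 | t = o43].
Proof.
case: t => [[|[|[|[|m]]]] Hm] //; [apply: Or41|apply: Or42|apply: Or43|apply: Or44]; exact: val_inj.
Qed.

Lemma contains3 n (s : {perm 'I_n}) (p : {perm 'I_3}) :
  contains s p = [exists i : 'I_n, exists j : 'I_n, exists k : 'I_n, [&& i < j, j < k,
     (s i < s j) == (p o30 < p o31), (s i < s k) == (p o30 < p o32)
   & (s j < s k) == (p o31 < p o32)]].
Proof.
apply/idP/idP.
  case/existsP => f /forallP H.
  have H' (j l : 'I_3) : j < l -> (f j < f l) && ((s (f j) < s (f l)) == (p j < p l)).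
    by move=> jl; move: (H j) => /forallP /(_ l) /implyP; apply.
  case/andP: (H' o30 o31 isT) => a1 b1.
  case/andP: (H' o30 o32 isT) => a2 b2.
  case/andP: (H' o31 o32 isT) => a3 b3.
  apply/existsP; exists (f o30); apply/existsP; exists (f o31); apply/existsP; exists (f o32).
  by rewrite a1 a3 b1 b2 b3.
case/existsP => i /existsP [j /existsP [k /and5P [ij jk c1 c2 c3]]].
apply/existsP; exists [ffun t : 'I_3 => if val t == 0 then i else if val t == 1 then j else k].
apply/forallP => t; apply/forallP => u; apply/implyP.
case: (I3cases t) => ->; case: (I3cases u) => -> //= _; rewrite !ffunE /=.
- by rewrite ij c1.
- by rewrite (ltn_trans ij jk) c2.
- by rewrite jk c3.
Qed.

Lemma contains4 n (s : {perm 'I_n}) (p : {perm 'I_4}) :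
  contains s p = [exists i : 'I_n, exists j : 'I_n, exists k : 'I_n, exists l : 'I_n, [&& [&& i < j, j < k & k < l],
     (s i < s j) == (p o40 < p o41), (s i < s k) == (p o40 < p o42),
     (s i < s l) == (p o40 < p o43) &
     [&& (s j < s k) == (p o41 < p o42), (s j < s l) == (p o41 < p o43)
   & (s k < s l) == (p o42 < p o43)]]].
Proof.
apply/idP/idP.
  case/existsP => f /forallP H.
  have H' (j l : 'I_4) : j < l -> (f j < f l) && ((s (f j) < s (f l)) == (p j < p l)).
    by move=> jl; move: (H j) => /forallP /(_ l) /implyP; apply.
  case/andP: (H' o40 o41 isT) => a1 b1.
  case/andP: (H' o40 o42 isT) => a2 b2.
  case/andP: (H' o40 o43 isT) => a3 b3.
  case/andP: (H' o41 o42 isT) => a4 b4.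
  case/andP: (H' o41 o43 isT) => a5 b5.
  case/andP: (H' o42 o43 isT) => a6 b6.
  apply/existsP; exists (f o40); apply/existsP; exists (f o41); apply/existsP; exists (f o42).
  apply/existsP; exists (f o43).
  by rewrite a1 a4 a6 b1 b2 b3 b4 b5 b6.
case/existsP => i /existsP [j /existsP [k /existsP [l /and5P [/and3P [ij jk kl] c1 c2 c3 /and3P [c4 c5 c6]]]]].
apply/existsP; exists [ffun t : 'I_4 => if val t == 0 then i else if val t == 1 then j
   else if val t == 2 then k else l].
apply/forallP => t; apply/forallP => u; apply/implyP.
case: (I4cases t) => ->; case: (I4cases u) => -> //= _; rewrite !ffunE /=.
- by rewrite ij c1.
- by rewrite (ltn_trans ij jk) c2.
- by rewrite (ltn_trans ij (ltn_trans jk kl)) c3.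
- by rewrite jk c4.
- by rewrite (ltn_trans jk kl) c5.
- by rewrite kl c6.
Qed.

Lemma p123E : [/\ p123 o30 = o30, p123 o31 = o31 & p123 o32 = o32].
Proof. by rewrite /p123 !perm1. Qed.

Lemma p132E : [/\ p132 o30 = o30, p132 o31 = o32 & p132 o32 = o31].
Proof.
have e1 : (inord 1 : 'I_3) = o31 by apply: ord_inj; rewrite inordK.
have e2 : (inord 2 : 'I_3) = o32 by apply: ord_inj; rewrite inordK.
by rewrite /p132 e1 e2 tpermL tpermR tpermD.
Qed.

Lemma p213E : [/\ p213 o30 = o31, p213 o31 = o30 & p213 o32 = o32].
Proof.
have e1 : (inord 1 : 'I_3) = o31 by apply: ord_inj; rewrite inordK.
have e0 : (inord 0 : 'I_3) = o30 by apply: ord_inj; rewrite inordK.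
by rewrite /p213 e1 e0 tpermL tpermR tpermD.
Qed.

Lemma p3421E : [/\ p3421 o40 = o42, p3421 o41 = o43, p3421 o42 = o41 & p3421 o43 = o40].
Proof.
by rewrite /p3421 !permE /f3421; split; apply: ord_inj; rewrite inordK. Qed.


Definition P12 n (s : {perm 'I_n}) :=
  [exists i : 'I_n, exists j : 'I_n, exists k : 'I_n, [&& i < j, j < k, s i < s j & s i < s k]].
Definition P3421 n (s : {perm 'I_n}) :=
  [exists i : 'I_n, exists j : 'I_n, exists k : 'I_n, exists l : 'I_n,
     [&& [&& i < j, j < k & k < l], s l < s k, s k < s i & s i < s j]].

Lemma perm_ltNE n (s : {perm 'I_n}) i j : i != j -> ~~ (s i < s j) = (s j < s i).
Proof.
move=> ij; rewrite -leqNgt leq_eqVlt.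
have -> : (nat_of_ord (s j) == s i) = false.
  by apply/negbTE; rewrite val_eqE (inj_eq perm_inj) eq_sym.
done.
Qed.

Lemma neq_lt n (i j : 'I_n) : i < j -> i != j.
Proof. by move=> h; apply/eqP => e; move: h; rewrite e ltnn. Qed.

Lemma cP12 n (s : {perm 'I_n}) : contains s p123 || contains s p132 = P12 s.
Proof.
rewrite !contains3; case: p123E => -> -> ->; case: p132E => -> -> -> /=.
apply/idP/idP.
  case/orP.
    case/existsP => i /existsP [j /existsP [k /and5P [ij jk /eqP c1 /eqP c2 /eqP c3]]].
    by apply/existsP; exists i; apply/existsP; exists j; apply/existsP; exists k; rewrite ij jk c1 c2.
  case/existsP => i /existsP [j /existsP [k /and5P [ij jk /eqP c1 /eqP c2 /eqP c3]]].
  by apply/existsP; exists i; apply/existsP; exists j; apply/existsP; exists k; rewrite ij jk c1 c2.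
case/existsP => i /existsP [j /existsP [k /and4P [ij jk c1 c2]]].
case jk': (s j < s k).
  by apply/orP; left; apply/existsP; exists i; apply/existsP; exists j; apply/existsP; exists k;
     rewrite ij jk c1 c2 jk'.
apply/orP; right; apply/existsP; exists i; apply/existsP; exists j; apply/existsP; exists k.
by rewrite ij jk c1 c2 jk'.
Qed.

Lemma cP3421 n (s : {perm 'I_n}) : contains s p3421 = P3421 s.
Proof.
rewrite !contains4; case: p3421E => -> -> -> -> /=.
apply/idP/idP.
  case/existsP => i /existsP [j /existsP [k /existsP [l /and5P [/and3P [ij jk kl] /eqP c1 /eqP c2 /eqP c3 /and3P [/eqP c4 /eqP c5 /eqP c6]]]]].
  apply/existsP; exists i; apply/existsP; exists j; apply/existsP; exists k; apply/existsP; exists l.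
  rewrite ij jk kl c1 /=.
  rewrite -(perm_ltNE s (neq_lt kl)) -(perm_ltNE s (neq_lt (ltn_trans ij jk))) c6 c2.
  done.
case/existsP => i /existsP [j /existsP [k /existsP [l /and4P [/and3P [ij jk kl] c1 c2 c3]]]].
apply/existsP; exists i; apply/existsP; exists j; apply/existsP; exists k; apply/existsP; exists l.
have ik := ltn_trans ij jk; have jl := ltn_trans jk kl; have il := ltn_trans ij jl.
rewrite ij jk kl c3 /= !eqbF_neg (perm_ltNE s (neq_lt kl)) c1 (perm_ltNE s (neq_lt ik)) c2.
rewrite (perm_ltNE s (neq_lt il)) (ltn_trans c1 c2).
rewrite (perm_ltNE s (neq_lt jk)) (ltn_trans c2 c3).
by rewrite (perm_ltNE s (neq_lt jl)) (ltn_trans c1 (ltn_trans c2 c3)).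
Qed.

Definition Q1 n (s : {perm 'I_n}) := ~~ P12 s && ~~ P3421 s.

Lemma Av1E n : Av3 n p123 p132 p3421 = [set s | Q1 s].
Proof.
apply/setP => s; rewrite !inE /Q1 /avoids -cP12 -cP3421.
by rewrite negb_or andbA.
Qed.


Section Lift.
Variable n : nat.
Implicit Types (a b : 'I_n) (v : 'I_n.+1).

Lemma vlt v a b : (lift v a < lift v b) = (a < b).
Proof.
rewrite /= /bump; apply/idP/idP => h; case: (leqP v a) h => h1 h; case: (leqP v b) h => h2 h /=; lia.
Qed.

Lemma vlt1 v a : (lift v a < v) = (a < v).
Proof. rewrite /= /bump; apply/idP/idP => h; case: (leqP v a) h => h1 h /=; lia. Qed.

Lemma vlt2 v a : (v < lift v a) = (v <= a).
Proof. rewrite /= /bump; apply/idP/idP => h; case: (leqP v a) h => h1 h /=; lia. Qed.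

Lemma plt a b : (lift (@ord0 n) a < lift ord0 b) = (a < b).
Proof. by rewrite !lift0. Qed.

Lemma plt0 a : ((@ord0 n) < lift ord0 a) = true.
Proof. by rewrite lift0. Qed.

Lemma pltn0 (a : 'I_n.+1) : (a < (@ord0 n)) = false.
Proof. by []. Qed.

Variable t : {perm 'I_n}.

Lemma LP12 v : P12 (lift_perm ord0 v t) =
   P12 t || [exists j : 'I_n, exists k : 'I_n, [&& j < k, v <= t j & v <= t k]].
Proof.
apply/idP/idP.
  case/existsP => i /existsP [j /existsP [k /and4P [ij jk c1 c2]]].
  case: (unliftP ord0 j) ij jk c1 c2 => [j'|] -> //.
  case: (unliftP ord0 k) => [k'|] -> //.
  case: (unliftP ord0 i) => [i'|] -> //.
    rewrite !plt !lift_perm_lift !vlt => ij jk c1 c2.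
    by apply/orP; left; apply/existsP; exists i'; apply/existsP; exists j'; apply/existsP; exists k';
       rewrite ij jk c1 c2.
  rewrite !plt !lift_perm_lift lift_perm_id !vlt2 => _ jk c1 c2.
  by apply/orP; right; apply/existsP; exists j'; apply/existsP; exists k'; rewrite jk c1 c2.
case/orP.
  case/existsP => i /existsP [j /existsP [k /and4P [ij jk c1 c2]]].
  apply/existsP; exists (lift ord0 i); apply/existsP; exists (lift ord0 j); apply/existsP; exists (lift ord0 k).
  by rewrite !plt !lift_perm_lift !vlt ij jk c1 c2.
case/existsP => j /existsP [k /and3P [jk c1 c2]].
apply/existsP; exists ord0; apply/existsP; exists (lift ord0 j); apply/existsP; exists (lift ord0 k).
by rewrite !plt plt0 !lift_perm_lift lift_perm_id !vlt2 jk c1 c2.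
Qed.

Lemma LP3421 v : P3421 (lift_perm ord0 v t) =
   P3421 t || [exists j : 'I_n, exists k : 'I_n, exists l : 'I_n,
                 [&& j < k, k < l, t l < t k, t k < v & v <= t j]].
Proof.
apply/idP/idP.
  case/existsP => i /existsP [j /existsP [k /existsP [l /and4P [/and3P [ij jk kl] c1 c2 c3]]]].
  case: (unliftP ord0 j) ij jk c3 => [j'|] -> //.
  case: (unliftP ord0 k) kl c1 c2 => [k'|] -> //.
  case: (unliftP ord0 l) => [l'|] -> //.
  case: (unliftP ord0 i) => [i'|] -> //.
    rewrite !plt !lift_perm_lift !vlt => kl c1 c2 ij jk c3.
    by apply/orP; left; apply/existsP; exists i'; apply/existsP; exists j'; apply/existsP; exists k';
       apply/existsP; exists l'; rewrite ij jk kl c1 c2 c3.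
  rewrite !plt !lift_perm_lift lift_perm_id !vlt !vlt1 !vlt2 => kl c1 c2 _ jk c3.
  by apply/orP; right; apply/existsP; exists j'; apply/existsP; exists k'; apply/existsP; exists l';
     rewrite jk kl c1 c2 c3.
case/orP.
  case/existsP => i /existsP [j /existsP [k /existsP [l /and4P [/and3P [ij jk kl] c1 c2 c3]]]].
  apply/existsP; exists (lift ord0 i); apply/existsP; exists (lift ord0 j); apply/existsP; exists (lift ord0 k).
  apply/existsP; exists (lift ord0 l).
  by rewrite !plt !lift_perm_lift !vlt ij jk kl c1 c2 c3.
case/existsP => j /existsP [k /existsP [l /and5P [jk kl c1 c2 c3]]].
apply/existsP; exists ord0; apply/existsP; exists (lift ord0 j); apply/existsP; exists (lift ord0 k).
apply/existsP; exists (lift ord0 l).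
by rewrite !plt plt0 !lift_perm_lift lift_perm_id !vlt !vlt1 !vlt2 jk kl c1 c2 c3.
Qed.

End Lift.


Lemma card_lift n (P : pred {perm 'I_n.+1}) :
  #|[set s | P s]| = \sum_(v < n.+1) #|[set t : {perm 'I_n} | P (lift_perm ord0 v t)]|.
Proof.
rewrite -sum1_card (partition_big (fun s : {perm 'I_n.+1} => s ord0) xpredT) //=.
apply: eq_bigr => v _.
rewrite -sum1_card.
rewrite (reindex (lift_perm ord0 v)) /=; last first.
  pose ulsf i (s : {perm 'I_n.+1}) k := odflt k (unlift (s i) (s (lift i k))).
  have ulsfK i (s : {perm 'I_n.+1}) k: lift (s i) (ulsf i s k) = s (lift i k).
    rewrite /ulsf; have:= neq_lift i k.
    by rewrite -(can_eq (permK s)) => /unlift_some[] ? ? ->.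
  have inj_ulsf: injective (ulsf ord0 _).
    move=> s; apply: can_inj (ulsf (s ord0) s^-1%g) _ => k'.
    by rewrite {1}/ulsf ulsfK !permK liftK.
  exists (fun s => perm (inj_ulsf s)) => [s _ | s].
    by apply/permP=> k'; rewrite permE /ulsf lift_perm_lift lift_perm_id liftK.
  rewrite inE => /andP [_ /eqP si0]; apply/permP=> k.
  case: (unliftP ord0 k) => [k'|] ->; rewrite ?lift_perm_id //.
  by rewrite lift_perm_lift -si0 permE ulsfK.
apply: eq_bigl => t; rewrite !inE lift_perm_id eqxx andbT.
done.
Qed.

Lemma sum_split n (F : 'I_n.+1 -> nat) : 0 < n ->
  (forall v : 'I_n.+1, v < n.-1 -> F v = 0) ->
  \sum_(v < n.+1) F v = F ord_max + F (inord n.-1).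
Proof.
move=> n0 H.
rewrite (bigD1 ord_max) //= (bigD1 (inord n.-1)) /=; last first.
  by rewrite -val_eqE /= inordK; lia.
rewrite big1 ?addn0 // => i /andP [h1 h2].
apply: H; move: h1 h2; rewrite -!val_eqE /= inordK; last by lia.
have := ltn_ord i; lia.
Qed.

Definition D n (s : {perm 'I_n}) :=
  [exists j : 'I_n, exists k : 'I_n, exists l : 'I_n,
     [&& j < k, k < l, val (s j) == n.-1 & s l < s k]].
Definition Inv n (s : {perm 'I_n}) :=
  [exists k : 'I_n, exists l : 'I_n, (k < l) && (s l < s k)].

Lemma vEqn n (v : 'I_n.+1) (x : 'I_n) : (val (lift v x) == n) = (val x == n.-1) && (v <= x).
Proof.
have := ltn_ord x; rewrite /= /bump => hx.
apply/idP/idP.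
  case: (leqP v x) => h1 /= /eqP h; apply/andP; split => //; apply/eqP; lia.
case/andP => /eqP h1 h2; rewrite h2; apply/eqP; lia.
Qed.

Lemma LD n (v : 'I_n.+1) (t : {perm 'I_n}) :
  D (lift_perm ord0 v t) = ((val v == n) && Inv t) || ((v < n) && D t).
Proof.
apply/idP/idP.
  case/existsP => j /existsP [k /existsP [l /and4P [jk kl c1 c2]]].
  case: (unliftP ord0 k) jk kl c2 => [k'|] -> //.
  case: (unliftP ord0 l) => [l'|] -> //.
  case: (unliftP ord0 j) c1 => [j'|] ->.
    rewrite !plt !lift_perm_lift !vlt /= vEqn => /andP [c1 c3] jk kl c2.
    apply/orP; right; apply/andP; split.
      have := ltn_ord (t j'); move/eqP: c1; lia.
    by apply/existsP; exists j'; apply/existsP; exists k'; apply/existsP; exists l'; rewrite jk kl c1 c2.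
  rewrite !plt !lift_perm_lift lift_perm_id !vlt /= => c1 _ kl c2.
  by apply/orP; left; rewrite c1; apply/existsP; exists k'; apply/existsP; exists l'; rewrite kl c2.
case/orP => /andP [c1].
  case/existsP => k /existsP [l /andP [kl c2]].
  apply/existsP; exists ord0; apply/existsP; exists (lift ord0 k); apply/existsP; exists (lift ord0 l).
  by rewrite !plt plt0 !lift_perm_lift lift_perm_id !vlt /= kl c2 c1.
case/existsP => j /existsP [k /existsP [l /and4P [jk kl c3 c2]]].
apply/existsP; exists (lift ord0 j); apply/existsP; exists (lift ord0 k); apply/existsP; exists (lift ord0 l).
rewrite !plt !lift_perm_lift !vlt /= vEqn jk kl c3 c2 /=.
move/eqP: c3 => c3; rewrite c3; lia.
Qed.


Lemma Q1max n (t : {perm 'I_n}) : Q1 (lift_perm ord0 ord_max t) = Q1 t.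
Proof.
rewrite /Q1 LP12 LP3421.
have e1 : [exists j : 'I_n, exists k : 'I_n, [&& j < k, (@ord_max n) <= t j & (@ord_max n) <= t k]] = false.
  apply/negbTE/existsP => [[j /existsP [k /and3P [_ h _]]]]; move: h => /=.
  by rewrite leqNgt ltn_ord.
have e2 : [exists j : 'I_n, exists k : 'I_n, exists l : 'I_n,
                 [&& j < k, k < l, t l < t k, t k < (@ord_max n) & (@ord_max n) <= t j]] = false.
  apply/negbTE/existsP => [[j /existsP [k /existsP [l /and5P [_ _ _ _ h]]]]]; move: h => /=.
  by rewrite leqNgt ltn_ord.
by rewrite e1 e2 !orbF.
Qed.

Lemma Q1low n (t : {perm 'I_n}) (v : 'I_n.+1) : v < n.-1 -> Q1 (lift_perm ord0 v t) = false.
Proof.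
case: n t v => [|n] t v hv; first by [].
rewrite /Q1 LP12.
suff -> : [exists j : 'I_n.+1, exists k : 'I_n.+1, [&& j < k, v <= t j & v <= t k]] = true by rewrite orbT.
have n2 : 0 < n by lia.
pose x : 'I_n.+1 := inord n; pose y : 'I_n.+1 := inord n.-1.
have vx : nat_of_ord x = n by rewrite inordK //; lia.
have vy : nat_of_ord y = n.-1 by rewrite inordK //; lia.
pose a := (t^-1)%g x; pose b := (t^-1)%g y.
have ta : t a = x by rewrite /a permKV.
have tb : t b = y by rewrite /b permKV.
have hva : v <= t a by rewrite ta vx; lia.
have hvb : v <= t b by rewrite tb vy; lia.
case: (ltngtP a b) => h.
- by apply/existsP; exists a; apply/existsP; exists b; rewrite h hva hvb.
- by apply/existsP; exists b; apply/existsP; exists a; rewrite h hva hvb.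
- have : a = b by apply: val_inj.
  move/(congr1 t); rewrite ta tb => /(congr1 (@nat_of_ord _)); rewrite vx vy; lia.
Qed.

Lemma Q1sec n (t : {perm 'I_n}) (v : 'I_n.+1) : nat_of_ord v = n.-1 ->
  Q1 (lift_perm ord0 v t) = Q1 t && ~~ D t.
Proof.
move=> hv; rewrite /Q1 LP12 LP3421.
have e1 : [exists j : 'I_n, exists k : 'I_n, [&& j < k, v <= t j & v <= t k]] = false.
  apply/negbTE/existsP => [[j /existsP [k /and3P [jk h1 h2]]]].
  have := ltn_ord (t j); have := ltn_ord (t k); rewrite hv in h1 h2 => h3 h4.
  have : t j = t k by apply: val_inj => /=; lia.
  by move/perm_inj => e; move: jk; rewrite e ltnn.
have e2 : [exists j : 'I_n, exists k : 'I_n, exists l : 'I_n,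
                 [&& j < k, k < l, t l < t k, t k < v & v <= t j]] = D t.
  apply/idP/idP.
    case/existsP => j /existsP [k /existsP [l /and5P [jk kl c1 c2 c3]]].
    apply/existsP; exists j; apply/existsP; exists k; apply/existsP; exists l.
    rewrite jk kl c1 /=; have := ltn_ord (t j); rewrite hv in c3 => h; rewrite andbT; apply/eqP; lia.
  case/existsP => j /existsP [k /existsP [l /and4P [jk kl /eqP c1 c2]]].
  apply/existsP; exists j; apply/existsP; exists k; apply/existsP; exists l.
  rewrite jk kl c2 hv c1 leqnn andbT /=.
  have : t k != t j by rewrite (inj_eq perm_inj); apply/eqP => e; move: jk; rewrite e ltnn.
  rewrite -val_eqE c1; have := ltn_ord (t k); move=> h1 /eqP /= h2; lia.
by rewrite e1 e2 orbF negb_or andbA.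
Qed.

Lemma incr_id n (r : {perm 'I_n}) : (forall k l : 'I_n, k < l -> r k < r l) -> r = 1%g.
Proof.
have ge (f : {perm 'I_n}) : (forall k l : 'I_n, k < l -> f k < f l) -> forall i : 'I_n, i <= f i.
  move=> H; suff: forall m (i : 'I_n), val i = m -> m <= f i by move=> h i; apply: h.
  elim=> [//|m IH] i /= hi.
  have hm : m < n by have := ltn_ord i; lia.
  have := H (Ordinal hm) i; rewrite /= hi ltnSn => /(_ isT).
  have := IH (Ordinal hm) erefl; lia.
move=> H.
have Hinv : forall k l : 'I_n, k < l -> (r^-1)%g k < (r^-1)%g l.
  move=> k l kl; rewrite ltnNge leq_eqVlt; apply/negP => /orP [/eqP e|h].
    have kl' : k = l by apply: (@perm_inj _ (r^-1)%g); apply: val_inj.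
    by move: kl; rewrite kl' ltnn.
  by move: (H _ _ h); rewrite !permKV => h'; move: (ltn_trans kl h'); rewrite ltnn.
apply/permP => i; rewrite perm1; apply: val_inj; apply/eqP; rewrite eqn_leq.
have h1 := ge r H i; have h2 := ge _ Hinv (r i); rewrite permK in h2.
by rewrite h1 h2.
Qed.

Lemma P12_small n (s : {perm 'I_n}) : n <= 2 -> P12 s = false.
Proof.
move=> hn; apply/negbTE/existsP => [[i /existsP [j /existsP [k /and4P [ij jk _ _]]]]].
have := ltn_ord k; lia.
Qed.

Lemma P3421_small n (s : {perm 'I_n}) : n <= 3 -> P3421 s = false.
Proof.
move=> hn; apply/negbTE/existsP => [[i /existsP [j /existsP [k /existsP [l /and4P [/and3P [ij jk kl] _ _ _]]]]]].
have := ltn_ord l; lia.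
Qed.

Lemma D_small n (s : {perm 'I_n}) : n <= 2 -> D s = false.
Proof.
move=> hn; apply/negbTE/existsP => [[i /existsP [j /existsP [k /and4P [ij jk _ _]]]]].
have := ltn_ord k; lia.
Qed.

Lemma card_noinv n : #|[set s : {perm 'I_n} | Q1 s && ~~ Inv s]| = (n <= 2).
Proof.
case: (leqP n 2) => hn.
  have -> : [set s : {perm 'I_n} | Q1 s && ~~ Inv s] = [set 1%g].
    apply/setP => s; rewrite !inE /Q1 P12_small // P3421_small; last by lia.
    apply/idP/idP => [h|/eqP ->].
      apply/eqP; apply: incr_id => k l kl; have nlk : l != k by rewrite eq_sym neq_lt.
      rewrite -(perm_ltNE s nlk).
      apply/negP => h'; move: h; rewrite /= => /negP; apply.
      by apply/existsP; exists k; apply/existsP; exists l; rewrite kl h'.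
    apply/negP => /existsP [k /existsP [l /andP [kl]]]; rewrite !perm1 => lk.
    by move: (ltn_trans kl lk); rewrite ltnn.
  by rewrite cards1.
apply/eqP; rewrite cards_eq0; apply/eqP/setP => s; rewrite !inE.
apply/negbTE; rewrite negb_and negbK /Q1 negb_and negbK; apply/orP.
case: (boolP (Inv s)) => hi; [by right | left].
have o0 : 0 < n by lia. have o1 : 1 < n by lia. have o2 : 2 < n by lia.
have inc : forall k l : 'I_n, k < l -> s k < s l.
  move=> k l kl; have nlk : l != k by rewrite eq_sym neq_lt.
  rewrite -(perm_ltNE s nlk); apply/negP => h'.
  by move/negP: hi; apply; apply/existsP; exists k; apply/existsP; exists l; rewrite kl h'.
apply/orP; left; apply/existsP; exists (Ordinal o0); apply/existsP; exists (Ordinal o1); apply/existsP; exists (Ordinal o2).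
by rewrite !inc.
Qed.


Definition A n := #|[set s : {perm 'I_n} | Q1 s]|.
Definition E n := #|[set s : {perm 'I_n} | Q1 s && ~~ D s]|.

Lemma recA n : 0 < n -> A n.+1 = A n + E n.
Proof.
move=> n0; rewrite /A (card_lift (@Q1 n.+1)) sum_split //.
- congr (_ + _).
    by apply: eq_card => t; rewrite !inE Q1max.
  by apply: eq_card => t; rewrite !inE Q1sec // inordK //; lia.
- move=> v hv; apply/eqP; rewrite cards_eq0; apply/eqP/setP => t.
  by rewrite !inE Q1low.
Qed.

Lemma recE n : 0 < n -> E n.+1 = E n + (n <= 2).
Proof.
move=> n0; rewrite /E (card_lift (fun s : {perm 'I_n.+1} => Q1 s && ~~ D s)) sum_split //.
- rewrite addnC; congr (_ + _).
    apply: eq_card => t; rewrite !inE Q1sec ?inordK //; try lia.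
    rewrite LD /= inordK; last by lia.
    have -> : (n.-1 == n) = false by apply/eqP; lia.
    have -> : (n.-1 < n) = true by lia.
    by rewrite /= -andbA andbb.
  rewrite -(card_noinv n); apply: eq_card => t; by rewrite !inE Q1max LD /= eqxx ltnn /= orbF.
- move=> v hv; apply/eqP; rewrite cards_eq0; apply/eqP/setP => t.
  by rewrite !inE Q1low.
Qed.

Lemma A1 : A 1 = 1.
Proof.
rewrite /A; have -> : [set s : {perm 'I_1} | Q1 s] = setT.
  by apply/setP => s; rewrite !inE /Q1 P12_small // P3421_small.
by rewrite cardsT card_Sn.
Qed.

Lemma E1 : E 1 = 1.
Proof.
rewrite /E; have -> : [set s : {perm 'I_1} | Q1 s && ~~ D s] = setT.
  by apply/setP => s; rewrite !inE /Q1 P12_small // P3421_small // D_small.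
by rewrite cardsT card_Sn.
Qed.

Lemma E3 n : 3 <= n -> E n = 3.
Proof.
elim: n => [//|n IH] hn.
case: (ltngtP n 2) => h.
- lia.
- rewrite recE; last by lia.
  rewrite IH //; lia.
- rewrite h recE // recE // E1; done.
Qed.

Lemma A3 n : 3 <= n -> A n = 3 * n - 5.
Proof.
elim: n => [//|n IH] hn.
case: (ltngtP n 2) => h.
- lia.
- rewrite recA; last by lia.
  rewrite IH // E3 //; lia.
- rewrite h recA // recA // A1 E1 recE // E1; done.
Qed.

Theorem class1 n : 3 <= n -> #|Av3 n p123 p132 p3421| = 3 * n - 5.
Proof. by move=> hn; rewrite Av1E -/(A n) A3. Qed.


Lemma rc_inj n (s : {perm 'I_n}) : injective (fun i => rev_ord (s (rev_ord i))).
Proof. by move=> i j /rev_ord_inj /perm_inj /rev_ord_inj. Qed.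

Definition rc n (s : {perm 'I_n}) : {perm 'I_n} := perm (@rc_inj n s).
Definition Phi n (s : {perm 'I_n}) : {perm 'I_n} := rc (s^-1)%g.

Lemma rcE n (s : {perm 'I_n}) i : rc s i = rev_ord (s (rev_ord i)).
Proof. by rewrite permE. Qed.

Lemma rc_inv n (s : {perm 'I_n}) : ((rc s)^-1)%g = rc (s^-1)%g.
Proof.
apply/permP => i; apply: (@perm_inj _ (rc s)).
by rewrite permKV !rcE rev_ordK permKV rev_ordK.
Qed.

Lemma rcK n (s : {perm 'I_n}) : rc (rc s) = s.
Proof. by apply/permP => i; rewrite !rcE !rev_ordK. Qed.

Lemma PhiK n (s : {perm 'I_n}) : Phi (Phi s) = s.
Proof. by rewrite /Phi rc_inv invgK rcK. Qed.

Lemma rev_lt n (a b : 'I_n) : (rev_ord a < rev_ord b) = (b < a).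
Proof.
rewrite /=; have := ltn_ord a; have := ltn_ord b => ha hb.
by apply/idP/idP => h; lia.
Qed.

Lemma contains_rc n m (s : {perm 'I_n}) (p : {perm 'I_m}) :
  contains s p -> contains (rc s) (rc p).
Proof.
case/existsP => f /forallP H.
have H' (j l : 'I_m) : j < l -> (f j < f l) && ((s (f j) < s (f l)) == (p j < p l)).
  by move=> jl; move: (H j) => /forallP /(_ l) /implyP; apply.
apply/existsP; exists [ffun j => rev_ord (f (rev_ord j))].
apply/forallP => j; apply/forallP => l; apply/implyP => jl.
rewrite !ffunE !rcE !rev_ordK !rev_lt.
by apply: H'; rewrite rev_lt.
Qed.

Lemma contains_inv n m (s : {perm 'I_n}) (p : {perm 'I_m}) :
  contains s p -> contains (s^-1)%g (p^-1)%g.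
Proof.
case/existsP => f /forallP H.
have H' (j l : 'I_m) : j < l -> (f j < f l) && ((s (f j) < s (f l)) == (p j < p l)).
  by move=> jl; move: (H j) => /forallP /(_ l) /implyP; apply.
have fm (j l : 'I_m) : (f j < f l) = (j < l).
  case: (ltngtP j l) => h.
  - by case/andP: (H' _ _ h).
  - by case/andP: (H' _ _ h) => h' _; apply/negbTE; rewrite -leqNgt ltnW.
  - by rewrite (val_inj h) ltnn.
have sm (j l : 'I_m) : p j < p l -> s (f j) < s (f l).
  move=> pl; case: (ltngtP j l) => h.
  - by case/andP: (H' _ _ h) => _ /eqP ->.
  - case/andP: (H' _ _ h) => h1 /eqP h2.
    have nfl : f l != f j by apply: neq_lt.
    by rewrite -(perm_ltNE s nfl) h2 -leqNgt ltnW.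
  - by move: pl; rewrite (val_inj h) ltnn.
apply/existsP; exists [ffun v => s (f ((p^-1)%g v))].
apply/forallP => v; apply/forallP => w; apply/implyP => vw.
rewrite !ffunE !permK fm eqxx andbT.
by apply: sm; rewrite !permKV.
Qed.

Lemma containsPhi n m (s : {perm 'I_n}) (p : {perm 'I_m}) :
  contains (Phi s) (Phi p) = contains s p.
Proof.
have h (n' : nat) (s' : {perm 'I_n'}) (p' : {perm 'I_m}) : contains s' p' -> contains (Phi s') (Phi p').
  by move=> c; apply: contains_rc; apply: contains_inv.
apply/idP/idP; last exact: h.
by move/h; rewrite !PhiK.
Qed.

Lemma revI3 : [/\ rev_ord o30 = o32, rev_ord o31 = o31 & rev_ord o32 = o30].
Proof. by split; apply: val_inj. Qed.
Lemma revI4 : [/\ rev_ord o40 = o43, rev_ord o41 = o42, rev_ord o42 = o41 & rev_ord o43 = o40].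
Proof. by split; apply: val_inj. Qed.

Lemma inv_val n (p : {perm 'I_n}) x y : p y = x -> (p^-1)%g x = y.
Proof. by move=> <-; rewrite permK. Qed.

Lemma Phi123 : Phi p123 = p123.
Proof. by rewrite /Phi /p123 invg1; apply/permP => i; rewrite rcE !perm1 rev_ordK. Qed.

Lemma Phi132 : Phi p132 = p213.
Proof.
rewrite /Phi /p132 tpermV -/p132; apply/permP => i; rewrite rcE.
case: p132E p213E revI3 => a1 a2 a3 [b1 b2 b3] [c1 c2 c3].
by case: (I3cases i) => ->; rewrite ?c1 ?c2 ?c3 ?a1 ?a2 ?a3 ?c1 ?c2 ?c3 ?b1 ?b2 ?b3.
Qed.

Lemma Phi3421 : Phi p3421 = p3421.
Proof.
rewrite /Phi; apply/permP => i; rewrite rcE.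
case: p3421E revI4 => a1 a2 a3 a4 [c1 c2 c3 c4].
have d1 := inv_val a1; have d2 := inv_val a2; have d3 := inv_val a3; have d4 := inv_val a4.
case: (I4cases i) => ->; rewrite ?c1 ?c2 ?c3 ?c4.
- by rewrite d2 c2 a1.
- by rewrite d1 c1 a2.
- by rewrite d3 c3 a3.
- by rewrite d4 c4 a4.
Qed.

Lemma Av2E n : Av3 n p123 p213 p3421 = (@Phi n) @^-1: Av3 n p123 p132 p3421.
Proof.
apply/setP => s; rewrite !inE /avoids.
symmetry; rewrite -{1}Phi123 -{1}Phi3421 -{1}(PhiK p132) Phi132 !containsPhi.
done.
Qed.

Unset Implicit Arguments.

Theorem theorem3p5 (n : nat) : 3 <= n ->
  #|Av3 n p123 p132 p3421| = 3 * n - 5 /\ #|Av3 n p123 p213 p3421| = 3 * n - 5.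
Proof.
move=> hn; split; first exact: class1.
rewrite Av2E card_preimset; first exact: class1.
exact: (can_inj (@PhiK n)).
Qed.
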